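(* The morphism $\pi_N:\mathcal M(N,K)\to L^-\mathrm{GL}_K$, $(B,\psi,\overline\psi)\mapsto1+\overline\psi(z-\widetilde B/2)^{-1}\psi$, is Poisson.
   Context: $\mathcal M(N,K)=\mathrm{Rep}(N,K)/\!/\mathrm{GL}_N$, with $\mathrm{Rep}(N,K)$ the triples $(B,\psi,\overline\psi)$, $B\in\mathrm{Mat}_{N\times N}(\mathbb C)$, $\psi\in\mathrm{Mat}_{N\times K}$, $\overline\psi\in\mathrm{Mat}_{K\times N}$, and $g\cdot(B,\psi,\overline\psi)=(gBg^{-1},g\psi,\overline\psi g^{-1})$; its Poisson structure is induced from $\{\psi_{ia},\overline\psi_{bj}\}=\delta_{ab}\delta_{ij}$, $\{B_{mn},B_{pq}\}=\delta_{np}\sum_a\overline\psi_{aq}\psi_{ma}-\delta_{mq}\sum_a\overline\psi_{an}\psi_{pa}$, $\{B_{mn},\psi_{ia}\}=\{B_{mn},\overline\psi_{bj}\}=0$ (commuting variables). $\widetilde B=B+\psi\overline\psi$ and $(z-\widetilde B/2)^{-1}$ is expanded as a power series in $z^{-1}$. $L^-\mathrm{GL}_K$ is the group of series $1+\sum_{i\ge1}g_iz^{-i}$, $g_i\in\mathfrak{gl}_K$; $T^{(n)}_{ab}$ is the $(a,b)$ entry of $g_{n+1}$, $T^{(-1)}_{ab}=\delta_{ab}$, $T_{ab}(u)=\sum_{i\ge-1}T^{(i)}_{ab}u^{-i-1}$, and its Poisson structure is $(u-v)\{T_{ab}(u),T_{cd}(v)\}=T_{ad}(v)T_{cb}(u)-T_{ad}(u)T_{cb}(v)$.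 *)

(* Defs.v *)
From HB Require Import structures.
From mathcomp Require Import all_boot all_order all_algebra.
From mathcomp Require Import mpoly.
Set Implicit Arguments. Unset Strict Implicit. Unset Printing Implicit Defensive.
Import Order.TTheory GRing.Theory Num.Theory.
Local Open Scope ring_scope.

(* Coordinate ring of Rep(N,K): polynomials in the N*N + N*K + K*N
   commuting variables B_mn, psi_ia, psibar_bj. *)
Definition nvar (N K : nat) : nat := (N * N + (N * K + K * N))%N.

Section Rep.
Variables (F : numClosedFieldType) (N K : nat).

Definition RepPoly := {mpoly F[nvar N K]}.

Definition varB (m n : 'I_N) : 'I_(nvar N K) :=
  lshift (N * K + K * N) (mxvec_index m n).
Definition varPsi (i : 'I_N) (a : 'I_K) : 'I_(nvar N K) :=
  rshift (N * N) (lshift (K * N) (mxvec_index i a)).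
Definition varPsibar (b : 'I_K) (j : 'I_N) : 'I_(nvar N K) :=
  rshift (N * N) (rshift (N * K) (mxvec_index b j)).

Definition Bmx : 'M[RepPoly]_N := \matrix_(m, n) 'X_(varB m n).
Definition Psimx : 'M[RepPoly]_(N, K) := \matrix_(i, a) 'X_(varPsi i a).
Definition Psibarmx : 'M[RepPoly]_(K, N) := \matrix_(b, j) 'X_(varPsibar b j).

Definition Btilde : 'M[RepPoly]_N := Bmx + Psimx *m Psibarmx.

(* The Poisson bracket on functions on Rep(N,K): the unique biderivation
   (for commuting variables) extending the brackets of the coordinates:
   {psi_ia, psibar_bj} = delta_ab delta_ij (hence {psibar_bj, psi_ia} = -...),
   {B_mn, B_pq} = delta_np sum_a psibar_aq psi_ma - delta_mq sum_a psibar_an psi_pa,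
   all other brackets of coordinates zero. *)
Definition brBB (m n p q : 'I_N) : RepPoly :=
  (n == p)%:R * (\sum_(a < K) 'X_(varPsibar a q) * 'X_(varPsi m a))
  - (m == q)%:R * (\sum_(a < K) 'X_(varPsibar a n) * 'X_(varPsi p a)).

Definition pbr (f g : RepPoly) : RepPoly :=
  \sum_(i < N) \sum_(a < K)
     (mderiv (varPsi i a) f * mderiv (varPsibar a i) g
      - mderiv (varPsibar a i) f * mderiv (varPsi i a) g)
  + \sum_(m < N) \sum_(n < N) \sum_(p < N) \sum_(q < N)
     mderiv (varB m n) f * mderiv (varB p q) g * brBB m n p q.

(* Pullback along pi_N of the coefficient of u^{-k} in T_ab(u), i.e. of
   T^{(k-1)}_{ab}:  k = 0 gives delta_ab, and for k = j+1,
   T^{(j)}_{ab} = (g_{j+1})_{ab} = (psibar (Btilde/2)^j psi)_{ab},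
   from 1 + psibar (z - Btilde/2)^{-1} psi = 1 + sum_j psibar (Btilde/2)^j psi z^{-j-1}. *)
Definition piT (k : nat) (a b : 'I_K) : RepPoly :=
  match k with
  | 0%N => (a == b)%:R
  | j.+1 => (((2%:R : F) ^- j)%:MP *: (Psibarmx *m (Btilde ^+ j) *m Psimx)) a b
  end.

End Rep.
Arguments piT : clear implicits.

(* Main.v *)
Require Import Defs.
From HB Require Import structures.
From mathcomp Require Import all_boot all_order all_algebra.
From mathcomp Require Import mpoly.
From mathcomp Require Import ring zify.
Import Order.TTheory GRing.Theory Num.Theory.
Local Open Scope ring_scope.
Set Implicit Arguments. Unset Strict Implicit.

Section Sums.
Variables (R : comRingType) (phi : nat -> nat -> R).

Definition Sd n lo hi := \sum_(lo <= x < hi) phi x (n - x)%N.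

Definition Phi k l :=
  - (\sum_(s < l.+1) phi (l - s)%N ((s + k)%N).+1)
  + \sum_(t < k) (phi ((t + l)%N).+1 ((k - t.+1)%N).+1 - phi t.+1 ((l + (k - t.+1))%N).+1)
  + \sum_(s < l.+1) phi ((k + (l - s))%N).+1 s.

Lemma sum_shift (G : nat -> R) (a m : nat) :
  \sum_(t < m) G (t + a)%N = \sum_(a <= x < (a + m)%N) G x.
Proof.
have -> : \sum_(a <= x < (a + m)%N) G x = \sum_((0 + a)%N <= x < (a + m)%N) G x by rewrite add0n.
by rewrite big_addn addKn big_mkord.
Qed.

Lemma T1E k l : \sum_(s < l.+1) phi (l - s)%N ((s + k)%N).+1 = Sd ((k + l)%N).+1 0 l.+1.
Proof.
rewrite -(big_mkord xpredT (fun s => phi (l - s)%N ((s + k)%N).+1)) big_nat_rev /Sd; apply: eq_big_nat => s /andP[_ hs].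
congr phi; lia.
Qed.

Lemma T3E k l : \sum_(s < l.+1) phi ((k + (l - s))%N).+1 s = Sd ((k + l)%N).+1 k.+1 ((k + l)%N).+2.
Proof.
rewrite -(big_mkord xpredT (fun s => phi ((k + (l - s))%N).+1 s)) big_nat_rev /Sd.
rewrite (eq_big_nat _ _ (F2 := fun s => phi (s + k.+1)%N ((k + l).+1 - (s + k.+1))%N)); last first.
  move=> s /andP[_ hs]; congr phi; lia.
have -> : \sum_(k.+1 <= x < ((k + l)%N).+2) phi x (((k + l)%N).+1 - x)%N =
  \sum_((0 + k.+1)%N <= x < ((k + l)%N).+2) phi x (((k + l)%N).+1 - x)%N by rewrite add0n.
rewrite big_addn.
have -> : (((k + l)%N).+2 - k.+1 = l.+1)%N by lia.
by [].
Qed.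

Lemma T2aE k l : \sum_(t < k) phi ((t + l)%N).+1 ((k - t.+1)%N).+1 = Sd ((k + l)%N).+1 l.+1 ((k + l)%N).+1.
Proof.
rewrite (eq_bigr (fun t : 'I_k => (fun x => phi x ((k + l).+1 - x)%N) (t + l.+1)%N)); last first.
  move=> t _ /=; have := ltn_ord t; move=> ht; congr phi; lia.
rewrite (sum_shift (fun x => phi x (((k + l)%N).+1 - x)%N)) /Sd; have -> : (l.+1 + k = (k + l).+1)%N by lia.
by [].
Qed.

Lemma T2bE k l : \sum_(t < k) phi t.+1 ((l + (k - t.+1))%N).+1 = Sd ((k + l)%N).+1 1 k.+1.
Proof.
rewrite (eq_bigr (fun t : 'I_k => (fun x => phi x ((k + l).+1 - x)%N) (t + 1)%N)); last first.
  move=> t _ /=; have := ltn_ord t; move=> ht; congr phi; lia.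
by rewrite (sum_shift (fun x => phi x (((k + l)%N).+1 - x)%N)) /Sd add1n.
Qed.

Lemma PhiE k l : Phi k l =
  - Sd ((k + l)%N).+1 0 l.+1 + (Sd ((k + l)%N).+1 l.+1 ((k + l)%N).+1 - Sd ((k + l)%N).+1 1 k.+1)
  + Sd ((k + l)%N).+1 k.+1 ((k + l)%N).+2.
Proof. by rewrite /Phi T1E sumrB T2aE T2bE T3E. Qed.

Lemma Phi0l l : Phi 0 l = phi l.+1 0 - phi 0 l.+1.
Proof.
rewrite PhiE /Sd add0n (big_geq (leqnn l.+1)) (big_geq (leqnn 1)) subrr addr0.
rewrite big_nat_recl // big_nat_recr //= big_add1 /= subn0 subnn; ring.
Qed.

Lemma Phik0 k : Phi k 0 = phi k.+1 0 - phi 0 k.+1.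
Proof.
rewrite PhiE /Sd addn0 subrr addr0 big_nat1 big_nat1 subn0 subnn; ring.
Qed.

Lemma PhiSS k l : Phi k.+1 l - Phi k l.+1 = 2%:R * (phi l.+1 k.+1 - phi k.+1 l.+1).
Proof.
rewrite !PhiE /Sd addSn addnS.
set n := ((k + l).+2)%N.
rewrite (big_nat_recr l.+1 0) //= (big_nat_recr k.+1 1) //=.
rewrite (big_ltn (m := l.+1) (n := n)); last by rewrite /n; lia.
rewrite (big_ltn (m := k.+1) (n := n.+1)); last by rewrite /n; lia.
have -> : (n - l.+1 = k.+1)%N by rewrite /n; lia.
have -> : (n - k.+1 = l.+1)%N by rewrite /n; lia.
ring.
Qed.

End Sums.

Section Work.
Variables (F : numClosedFieldType) (N K : nat).
Local Notation R := (RepPoly F N K).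
Implicit Types (f g h : R).
Local Notation bB := (brBB F K).
Local Notation vB := (@varB N K).
Local Notation vP := (@varPsi N K).
Local Notation vQ := (@varPsibar N K).
Local Notation xv v := ('X_v : R).

Lemma mderivXv (u v : 'I_(nvar N K)) : mderiv u ('X_v : R) = (v == u)%:R.
Proof.
rewrite mderivX mnm1E; case: eqP => [->|_]; last by rewrite scale0r.
have -> : (mnm1 u - mnm1 u)%MM = 0%MM by apply/mnmP=> j; rewrite mnmBE mnm0E subnn.
by rewrite mpolyX0 scale1r.
Qed.

Definition isDer (phi : R -> R) :=
  (forall f g, phi (f - g) = phi f - phi g) /\
  (forall f g, phi (f * g) = phi f * g + f * phi g).

Lemma der_mderiv u : isDer (mderiv u).
Proof. by split=> f g; rewrite ?mderivB ?mderivM. Qed.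

Lemma der_mulr phi h : isDer phi -> isDer (fun f => phi f * h).
Proof.
case=> H1 H2; split=> f g; rewrite ?H1 ?H2; first by rewrite mulrBl.
by rewrite mulrDl -!mulrA [g * h]mulrC.
Qed.

Lemma der_add phi psi : isDer phi -> isDer psi -> isDer (fun f => phi f + psi f).
Proof.
case=> H1 H2 [H3 H4]; split=> f g; rewrite ?H1 ?H2 ?H3 ?H4.
  by rewrite opprD addrACA.
by rewrite mulrDl mulrDr addrACA.
Qed.

Lemma der_sub phi psi : isDer phi -> isDer psi -> isDer (fun f => phi f - psi f).
Proof.
case=> H1 H2 [H3 H4]; split=> f g; rewrite ?H1 ?H2 ?H3 ?H4.
  ring.
rewrite mulrBl mulrBr; ring.
Qed.

Lemma der_sum (n : nat) (phi : 'I_n -> R -> R) :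
  (forall i, isDer (phi i)) -> isDer (fun f => \sum_(i < n) phi i f).
Proof.
move=> H; split=> f g.
  rewrite -sumrB; apply: eq_bigr => i _; by case: (H i) => ->.
rewrite mulr_suml mulr_sumr -big_split /=; apply: eq_bigr => i _.
by case: (H i) => _ ->.
Qed.

Lemma pbr_der g : isDer (fun f => pbr f g).
Proof.
unfold pbr.
apply: der_add.
  apply: der_sum => i; apply: der_sum => a; apply: der_sub;
  apply: der_mulr; apply: der_mderiv.
apply: der_sum => m; apply: der_sum => n; apply: der_sum => p; apply: der_sum => q.
apply: der_mulr; apply: der_mulr; apply: der_mderiv.
Qed.


Lemma pbrB f h g : pbr (f - h) g = pbr f g - pbr h g.
Proof. by case: (pbr_der g) => ->. Qed.
Lemma pbrM f h g : pbr (f * h) g = pbr f g * h + f * pbr h g.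
Proof. by case: (pbr_der g) => _ ->. Qed.
Lemma pbr0 g : pbr 0 g = 0.
Proof. by rewrite -{1}(mulr0 (0:R)) pbrM mulr0 mul0r addr0. Qed.
Lemma pbrN f g : pbr (- f) g = - pbr f g.
Proof. by rewrite -sub0r pbrB pbr0 sub0r. Qed.
Lemma pbrD f h g : pbr (f + h) g = pbr f g + pbr h g.
Proof. by rewrite -{1}[h]opprK pbrB pbrN opprK. Qed.
Lemma pbr_sum (I : Type) (r : seq I) (P : pred I) (E : I -> R) g :
  pbr (\sum_(i <- r | P i) E i) g = \sum_(i <- r | P i) pbr (E i) g.
Proof.
exact: (big_morph (fun f => pbr f g) (fun f h => pbrD f h g) (pbr0 g)).
Qed.
Lemma pbrC c g : pbr (c%:MP) g = 0.
Proof.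
rewrite /pbr; rewrite !big1 ?addr0 // => *; rewrite ?big1 // => *;
  rewrite ?big1 // => *; rewrite ?big1 // => *; by rewrite !mderivC !mul0r ?subrr.
Qed.
Lemma pbr_nat k g : pbr (k%:R) g = 0.
Proof. by rewrite -mpolyC_nat pbrC. Qed.
Lemma pbrCM c f g : pbr (c%:MP * f) g = c%:MP * pbr f g.
Proof. by rewrite pbrM pbrC mul0r add0r. Qed.

Lemma brBB_anti (m n p q : 'I_N) : bB p q m n = - bB m n p q.
Proof. rewrite /brBB [q == m]eq_sym [p == n]eq_sym; ring. Qed.

Lemma exch4 (H : 'I_N -> 'I_N -> 'I_N -> 'I_N -> R) :
  \sum_(m < N) \sum_(n < N) \sum_(p < N) \sum_(q < N) H m n p q =
  \sum_(p < N) \sum_(q < N) \sum_(m < N) \sum_(n < N) H m n p q.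
Proof.
under eq_bigr => m _ do rewrite exchange_big.
rewrite exchange_big; apply: eq_bigr => p _.
under eq_bigr => m _ do rewrite exchange_big.
by rewrite exchange_big.
Qed.

Lemma pbr_anti f g : pbr g f = - pbr f g.
Proof.
rewrite /pbr opprD; congr (_ + _).
  rewrite -sumrN; apply: eq_bigr => i _; rewrite -sumrN; apply: eq_bigr => a _; ring.
rewrite exch4 -sumrN; apply: eq_bigr => m _; rewrite -sumrN; apply: eq_bigr => n _.
rewrite -sumrN; apply: eq_bigr => p _; rewrite -sumrN; apply: eq_bigr => q _.
rewrite brBB_anti; ring.
Qed.

Lemma pbrMr f h g : pbr f (g * h) = pbr f g * h + g * pbr f h.
Proof. by rewrite [LHS]pbr_anti pbrM (pbr_anti f g) (pbr_anti f h); ring. Qed.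
Lemma pbrBr f h g : pbr f (g - h) = pbr f g - pbr f h.
Proof. by rewrite [LHS]pbr_anti pbrB (pbr_anti f g) (pbr_anti f h); ring. Qed.

Lemma pbrDr f h g : pbr f (g + h) = pbr f g + pbr f h.
Proof. by rewrite [LHS]pbr_anti pbrD (pbr_anti f g) (pbr_anti f h) opprD !opprK. Qed.
Lemma pbrNr f g : pbr f (- g) = - pbr f g.
Proof. by rewrite [LHS]pbr_anti pbrN (pbr_anti f g) opprK. Qed.
Lemma pbr_sumr (I : Type) (r : seq I) (P : pred I) (E : I -> R) f :
  pbr f (\sum_(i <- r | P i) E i) = \sum_(i <- r | P i) pbr f (E i).
Proof.
have H0 : pbr f 0 = 0 by rewrite pbr_anti pbr0 oppr0.
exact: (big_morph (fun g => pbr f g) (fun g h => pbrDr f h g) H0).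
Qed.

Lemma mxvec_index_eq m n (i i' : 'I_m) (j j' : 'I_n) :
  (mxvec_index i j == mxvec_index i' j') = (i == i') && (j == j').
Proof.
by rewrite /mxvec_index (inj_eq (@cast_ord_inj _ _ _)) (inj_eq (@enum_rank_inj _)).
Qed.

Definition veqE := (eq_lshift, eq_rshift, eq_lrshift, eq_rlshift, mxvec_index_eq).

Lemma sum2_delta n1 n2 (i : 'I_n1) (a : 'I_n2) (G : 'I_n1 -> 'I_n2 -> R) :
  \sum_(i' < n1) \sum_(a' < n2) ((i == i') && (a == a'))%:R * G i' a' = G i a.
Proof.
rewrite (bigD1 i) //= eqxx /= (bigD1 a) //= eqxx mul1r big1 ?addr0 => [|a' /negbTE].
  rewrite big1 ?addr0 // => i' /negbTE; rewrite eq_sym => ->.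
  by rewrite big1 // => a' _; rewrite mul0r.
by rewrite eq_sym => ->; rewrite mul0r.
Qed.

Lemma pbr_Psi (i : 'I_N) (a : 'I_K) g : pbr 'X_(vP i a) g = mderiv (vQ a i) g.
Proof.
rewrite /pbr [X in _ + X]big1 ?addr0 => [|m _]; last first.
  rewrite big1 // => n _; rewrite big1 // => p _; rewrite big1 // => q _.
  by rewrite mderivXv /varPsi /varB !veqE !mul0r.
under eq_bigr => i0 _ do under eq_bigr => a0 _ do
  rewrite !mderivXv /varPsi /varPsibar !veqE /= mul0r subr0.
exact: sum2_delta.
Qed.

Lemma pbr_Psibar (a : 'I_K) (i : 'I_N) g : pbr 'X_(vQ a i) g = - mderiv (vP i a) g.
Proof.
rewrite /pbr [X in _ + X]big1 ?addr0 => [|m _]; last first.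
  rewrite big1 // => n _; rewrite big1 // => p _; rewrite big1 // => q _.
  by rewrite mderivXv /varPsibar /varB !veqE !mul0r.
under eq_bigr => i0 _ do under eq_bigr => a0 _ do
  rewrite !mderivXv /varPsi /varPsibar !veqE /= mul0r sub0r.
rewrite -(sum2_delta a i (fun a0 i0 => - mderiv (vP i0 a0) g)) [RHS]exchange_big.
by apply: eq_bigr => i0 _; apply: eq_bigr => a0 _; rewrite mulrN.
Qed.

Lemma pbr_B (m n : 'I_N) g :
  pbr 'X_(vB m n) g = \sum_(p < N) \sum_(q < N) mderiv (vB p q) g * bB m n p q.
Proof.
rewrite /pbr big1 ?add0r => [|i _]; last first.
  rewrite big1 // => a _.
  by rewrite !mderivXv /varPsi /varPsibar /varB !veqE !mul0r subrr.
under eq_bigr => m0 _ do under eq_bigr => n0 _ do under eq_bigr => p _ do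
  under eq_bigr => q _ do rewrite mderivXv /varB !veqE -mulrA.
under eq_bigr => m0 _ do under eq_bigr => n0 _ do under eq_bigr => p _ do
  rewrite -mulr_sumr.
under eq_bigr => m0 _ do under eq_bigr => n0 _ do rewrite -mulr_sumr.
exact: (sum2_delta m n (fun m0 n0 => \sum_(p < N) \sum_(q < N) mderiv (vB p q) g * bB m0 n0 p q)).
Qed.


Lemma natr_and (b1 b2 : bool) : ((b1 && b2)%:R : R) = b1%:R * b2%:R.
Proof. by rewrite -mulnb natrM. Qed.

Lemma sum1_delta n (c : 'I_n) (G : 'I_n -> R) :
  \sum_(r < n) (c == r)%:R * G r = G c.
Proof.
rewrite (bigD1 c) //= eqxx mul1r big1 ?addr0 // => r /negbTE.
by rewrite eq_sym => ->; rewrite mul0r.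
Qed.

Lemma sum1_deltar n (c : 'I_n) (G : 'I_n -> R) :
  \sum_(r < n) G r * (c == r)%:R = G c.
Proof.
rewrite -[RHS](sum1_delta c); apply: eq_bigr => r _; exact: mulrC.
Qed.

Lemma pbr_PP (i j : 'I_N) (a b : 'I_K) : pbr (xv (vP i a)) (xv (vP j b)) = 0.
Proof. by rewrite pbr_Psi mderivXv /varPsi /varPsibar !veqE. Qed.
Lemma pbr_PQ (i j : 'I_N) (a b : 'I_K) :
  pbr (xv (vP i a)) (xv (vQ b j)) = ((b == a) && (j == i))%:R.
Proof. by rewrite pbr_Psi mderivXv /varPsi /varPsibar !veqE. Qed.
Lemma pbr_PB (i m n : 'I_N) (a : 'I_K) : pbr (xv (vP i a)) (xv (vB m n)) = 0.
Proof. by rewrite pbr_Psi mderivXv /varB /varPsibar !veqE. Qed.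
Lemma pbr_QP (i j : 'I_N) (a b : 'I_K) :
  pbr (xv (vQ a i)) (xv (vP j b)) = - ((j == i) && (b == a))%:R.
Proof. by rewrite pbr_Psibar mderivXv /varPsi /varPsibar !veqE. Qed.
Lemma pbr_QQ (i j : 'I_N) (a b : 'I_K) : pbr (xv (vQ a i)) (xv (vQ b j)) = 0.
Proof. by rewrite pbr_Psibar mderivXv /varPsi /varPsibar !veqE oppr0. Qed.
Lemma pbr_QB (i m n : 'I_N) (a : 'I_K) : pbr (xv (vQ a i)) (xv (vB m n)) = 0.
Proof. by rewrite pbr_Psibar mderivXv /varB /varPsi !veqE oppr0. Qed.
Lemma pbr_BP (i m n : 'I_N) (a : 'I_K) : pbr (xv (vB m n)) (xv (vP i a)) = 0.
Proof.
rewrite pbr_B big1 // => p _; rewrite big1 // => q _.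
by rewrite mderivXv /varB /varPsi !veqE mul0r.
Qed.
Lemma pbr_BQ (i m n : 'I_N) (a : 'I_K) : pbr (xv (vB m n)) (xv (vQ a i)) = 0.
Proof.
rewrite pbr_B big1 // => p _; rewrite big1 // => q _.
by rewrite mderivXv /varB /varPsibar !veqE mul0r.
Qed.
Lemma pbr_BB (m n p q : 'I_N) : pbr (xv (vB m n)) (xv (vB p q)) = bB m n p q.
Proof.
rewrite pbr_B.
under eq_bigr => p0 _ do under eq_bigr => q0 _ do rewrite mderivXv /varB !veqE.
exact: (sum2_delta p q (fun p0 q0 => bB m n p0 q0)).
Qed.

Local Notation Xm := (Psibarmx F N K).
Local Notation Ym := (Psimx F N K).
Local Notation Bm := (Bmx F N K).
Local Notation Bt := (Btilde F N K).

Lemma XmE a i : Xm a i = (xv (vQ a i)). Proof. by rewrite mxE. Qed.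
Lemma YmE i a : Ym i a = (xv (vP i a)). Proof. by rewrite mxE. Qed.
Lemma BtE m n : Bt m n = (xv (vB m n)) + \sum_(r < K) (xv (vP m r)) * (xv (vQ r n)).
Proof. by rewrite !mxE; congr (_ + _); apply: eq_bigr => r _; rewrite !mxE. Qed.

Lemma pbr_BtQ (m n p : 'I_N) (c : 'I_K) :
  pbr (Bt m n) (xv (vQ c p)) = (m == p)%:R * (xv (vQ c n)).
Proof.
rewrite BtE pbrD pbr_BQ add0r pbr_sum.
under eq_bigr => r _ do rewrite pbrM pbr_PQ pbr_QQ mulr0 addr0 natr_and -mulrA.
by rewrite (sum1_delta c (fun r => (p == m)%:R * (xv (vQ r n)))) eq_sym.
Qed.

Lemma pbr_BtP (m n q : 'I_N) (d : 'I_K) :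
  pbr (Bt m n) (xv (vP q d)) = - ((n == q)%:R * (xv (vP m d))).
Proof.
rewrite BtE pbrD pbr_BP add0r pbr_sum.
under eq_bigr => r _ do rewrite pbrM pbr_PP pbr_QP mul0r add0r natr_and mulrN mulrCA mulrA.
by rewrite sumrN (sum1_deltar d (fun r => (q == n)%:R * xv (vP m r))) eq_sym.
Qed.

Lemma pbr_BtB (m n p q : 'I_N) : pbr (Bt m n) (xv (vB p q)) = bB m n p q.
Proof.
rewrite BtE pbrD pbr_BB pbr_sum big1 ?addr0 // => r _.
by rewrite pbrM pbr_PB pbr_QB mul0r mulr0 addr0.
Qed.

Lemma pbr_BtBt (m n p q : 'I_N) : pbr (Bt m n) (Bt p q) = 0.
Proof.
rewrite [Bt p q]BtE pbrDr pbr_BtB pbr_sumr.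
under eq_bigr => s _ do rewrite pbrMr pbr_BtP pbr_BtQ.
rewrite /brBB !mulr_sumr -sumrB -big_split /= big1 // => s _; ring.
Qed.


Definition dm h r s (P : 'M[R]_(r, s)) : 'M[R]_(r, s) := map_mx (fun f => pbr f h) P.

Lemma dmE h r s (P : 'M[R]_(r, s)) i j : dm h P i j = pbr (P i j) h.
Proof. by rewrite mxE. Qed.

Lemma dm_mul h r s t (P : 'M[R]_(r, s)) (Q : 'M[R]_(s, t)) :
  dm h (P *m Q) = dm h P *m Q + P *m dm h Q.
Proof.
apply/matrixP => i j; rewrite !mxE pbr_sum -big_split /=.
by apply: eq_bigr => k _; rewrite pbrM !mxE.
Qed.

Lemma dm_one h n : dm h (1%:M : 'M[R]_n) = 0.
Proof. by apply/matrixP => i j; rewrite !mxE pbr_nat. Qed.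

Lemma dm_pow h (A : 'M[R]_N) l :
  dm h (A ^+ l) = \sum_(t < l) A ^+ t *m dm h A *m A ^+ (l - t.+1).
Proof.
elim: l => [|l IH]; first by rewrite expr0 big_ord0 dm_one.
have -> : A ^+ l.+1 = A ^+ l *m A by rewrite exprSr.
rewrite dm_mul IH big_ord_recr /= subnn expr0 mulmx1 mulmx_suml; congr (_ + _).
apply: eq_bigr => t _; rewrite -mulmxA; congr (_ *m _).
by rewrite subSS -(subnSK (ltn_ord t)) exprSr.
Qed.

Definition Wm n : 'M[R]_K := if n is n'.+1 then Xm *m Bt ^+ n' *m Ym else 1%:M.

Lemma dm_W h l : dm h (Wm l.+1) =
  dm h Xm *m Bt ^+ l *m Ym
  + Xm *m (\sum_(t < l) Bt ^+ t *m dm h Bt *m Bt ^+ (l - t.+1)) *m Ym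
  + Xm *m Bt ^+ l *m dm h Ym.
Proof. by rewrite /Wm !dm_mul dm_pow mulmxDl. Qed.

Lemma delta_mulE p q r (i : 'I_p) (a : 'I_q) (P : 'M[R]_(q, r)) x y :
  (delta_mx i a *m P) x y = (x == i)%:R * P a y.
Proof.
rewrite mxE (bigD1 a) //= mxE eqxx andbT big1 ?addr0 // => k /negbTE nk.
by rewrite mxE nk andbF mul0r.
Qed.

Lemma mul_deltaE p q r (P : 'M[R]_(p, q)) (i : 'I_q) (a : 'I_r) x y :
  (P *m delta_mx i a) x y = P x i * (y == a)%:R.
Proof.
rewrite mxE (bigD1 i) //= mxE eqxx /= big1 ?addr0 // => k /negbTE nk.
by rewrite mxE nk mulr0.
Qed.

Lemma mul_delta_mulE p q r s (P : 'M[R]_(p, q)) (i : 'I_q) (a : 'I_r) (Q : 'M[R]_(r, s)) x y :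
  (P *m delta_mx i a *m Q) x y = P x i * Q a y.
Proof.
rewrite -mulmxA mxE (bigD1 i) //= delta_mulE eqxx mul1r big1 ?addr0 // => k /negbTE nk.
by rewrite delta_mulE nk mul0r mulr0.
Qed.

Lemma dmQ_X a i : dm (xv (vQ a i)) Xm = 0.
Proof. by apply/matrixP => c p; rewrite dmE XmE pbr_QQ mxE. Qed.
Lemma dmQ_Y a i : dm (xv (vQ a i)) Ym = delta_mx i a.
Proof. by apply/matrixP => j d; rewrite dmE YmE pbr_PQ mxE andbC (eq_sym a) (eq_sym i). Qed.
Lemma dmQ_B a i : dm (xv (vQ a i)) Bt = delta_mx i a *m Xm.
Proof. by apply/matrixP => m n; rewrite dmE pbr_BtQ delta_mulE XmE. Qed.
Lemma dmP_X j b : dm (xv (vP j b)) Xm = - delta_mx b j.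
Proof. by apply/matrixP => c p; rewrite dmE XmE pbr_QP !mxE andbC (eq_sym j) (eq_sym b). Qed.
Lemma dmP_Y j b : dm (xv (vP j b)) Ym = 0.
Proof. by apply/matrixP => q d; rewrite dmE YmE pbr_PP mxE. Qed.
Lemma dmP_B j b : dm (xv (vP j b)) Bt = - (Ym *m delta_mx b j).
Proof. by apply/matrixP => m n; rewrite dmE pbr_BtP mxE mul_deltaE YmE mulrC. Qed.
Lemma dmB_X m n : dm (Bt m n) Xm = - (Xm *m delta_mx n m).
Proof.
apply/matrixP => c p; rewrite dmE XmE pbr_anti pbr_BtQ mxE mul_deltaE XmE.
by rewrite mulrC eq_sym.
Qed.
Lemma dmB_Y m n : dm (Bt m n) Ym = delta_mx n m *m Ym.
Proof.
apply/matrixP => q d; rewrite dmE YmE pbr_anti pbr_BtP opprK delta_mulE YmE.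
by rewrite eq_sym.
Qed.
Lemma dmB_B m n : dm (Bt m n) Bt = 0.
Proof. by apply/matrixP => p q; rewrite dmE pbr_anti pbr_BtBt oppr0 mxE. Qed.


Lemma Wm_rev l (t : 'I_l) : Xm *m Bt ^+ (l - t.+1) *m Ym = Wm (l - t).
Proof. by rewrite -(subnSK (ltn_ord t)). Qed.

Lemma LX l (a c d : 'I_K) (i : 'I_N) :
  pbr (Xm a i) (Wm l.+1 c d) = - \sum_(s < l.+1) Wm (l - s) a d * (Xm *m Bt ^+ s) c i.
Proof.
rewrite pbr_anti -dmE XmE dm_W dmQ_X dmQ_Y dmQ_B !mul0mx add0r mxE mul_deltaE.
rewrite mulmx_sumr mulmx_suml summxE big_ord_recr /= subnn.
congr (- (_ + _)).
  apply: eq_bigr => t _.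
  have -> : Xm *m (Bt ^+ t *m (delta_mx i a *m Xm) *m Bt ^+ (l - t.+1)) *m Ym =
    Xm *m Bt ^+ t *m delta_mx i a *m (Xm *m Bt ^+ (l - t.+1) *m Ym) by rewrite !mulmxA.
  by rewrite mul_delta_mulE Wm_rev mulrC.
by rewrite /Wm [(1%:M : 'M[R]_K) a d]mxE eq_sym mulrC.
Qed.


Lemma LY l (c d b : 'I_K) (j : 'I_N) :
  pbr (Ym j b) (Wm l.+1 c d) = \sum_(s < l.+1) (Bt ^+ (l - s) *m Ym) j d * Wm s c b.
Proof.
rewrite pbr_anti -dmE YmE dm_W dmP_X dmP_Y dmP_B !mulmx0 addr0 mxE.
have -> : (- delta_mx b j *m Bt ^+ l *m Ym) c d = - ((c == b)%:R * (Bt ^+ l *m Ym) j d).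
  by rewrite -mulmxA mulNmx mxE delta_mulE.
have -> : (Xm *m (\sum_(t < l) Bt ^+ t *m - (Ym *m delta_mx b j) *m Bt ^+ (l - t.+1)) *m Ym) c d
   = - \sum_(t < l) Wm t.+1 c b * (Bt ^+ (l - t.+1) *m Ym) j d.
  rewrite mulmx_sumr mulmx_suml summxE -sumrN; apply: eq_bigr => t _.
  have -> : Xm *m (Bt ^+ t *m - (Ym *m delta_mx b j) *m Bt ^+ (l - t.+1)) *m Ym =
     - (Xm *m Bt ^+ t *m Ym *m delta_mx b j *m (Bt ^+ (l - t.+1) *m Ym)).
    by rewrite !(mulmxN, mulNmx) !mulmxA.
  by rewrite mxE mul_delta_mulE.
rewrite big_ord_recl /= subn0 opprD !opprK [(Wm 0) c b]mxE mulrC eq_sym; congr (_ + _).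
by apply: eq_bigr => t _; rewrite mulrC.
Qed.

Lemma LB l (c d : 'I_K) (m n : 'I_N) :
  pbr (Bt m n) (Wm l.+1 c d) = (Bt ^+ l *m Ym) m d * Xm c n - Ym m d * (Xm *m Bt ^+ l) c n.
Proof.
rewrite pbr_anti -dmE dm_W dmB_X dmB_Y dmB_B.
rewrite big1 => [|t _]; last by rewrite mulmx0 mul0mx.
rewrite mulmx0 mul0mx addr0 mxE.
have -> : (- (Xm *m delta_mx n m) *m Bt ^+ l *m Ym) c d = - (Xm c n * (Bt ^+ l *m Ym) m d).
  by rewrite -mulmxA mulNmx mxE mul_delta_mulE.
have -> : (Xm *m Bt ^+ l *m (delta_mx n m *m Ym)) c d = (Xm *m Bt ^+ l) c n * Ym m d.
  by rewrite mulmxA mul_delta_mulE.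
rewrite [Xm c n * _]mulrC [_ * Ym m d]mulrC; ring.
Qed.

Lemma Bexp x y : Bt ^+ (x + y)%N = Bt ^+ x *m Bt ^+ y.
Proof. by rewrite exprD. Qed.

Section G.
Variables (l : nat) (c d : 'I_K).
Local Notation g := (Wm l.+1 c d).
Local Notation E := (delta_mx d c : 'M[R]_K).

Lemma DX : dm g Xm = - \sum_(s < l.+1) Wm (l - s)%N *m E *m (Xm *m Bt ^+ s).
Proof.
apply/matrixP => a i; rewrite dmE LX [RHS]mxE summxE; congr (- _).
by apply: eq_bigr => s _; rewrite mul_delta_mulE.
Qed.

Lemma DY : dm g Ym = \sum_(s < l.+1) (Bt ^+ (l - s)%N *m Ym) *m E *m Wm s.
Proof.
apply/matrixP => j b; rewrite dmE LY summxE.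
by apply: eq_bigr => s _; rewrite mul_delta_mulE.
Qed.

Lemma DB : dm g Bt = (Bt ^+ l *m Ym) *m E *m Xm - Ym *m E *m (Xm *m Bt ^+ l).
Proof.
apply/matrixP => m n; rewrite dmE LB [RHS]mxE [X in _ = _ + X]mxE.
by rewrite !mul_delta_mulE.
Qed.

End G.

Lemma addmxE' p q (A B : 'M[R]_(p, q)) i j : (A + B) i j = A i j + B i j.
Proof. by rewrite mxE. Qed.
Lemma oppmxE' p q (A : 'M[R]_(p, q)) i j : (- A) i j = - A i j.
Proof. by rewrite mxE. Qed.

Lemma main_br k l (a b c d : 'I_K) :
  pbr (Wm k.+1 a b) (Wm l.+1 c d) = Phi (fun x y => Wm x a d * Wm y c b) k l.
Proof.
rewrite -dmE dm_W DX DY DB.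
set E := delta_mx d c.
have T1 : (- \sum_(s < l.+1) Wm (l - s)%N *m E *m (Xm *m Bt ^+ s)) *m Bt ^+ k *m Ym
   = - \sum_(s < l.+1) Wm (l - s)%N *m E *m Wm ((s + k)%N).+1.
  rewrite !mulNmx !mulmx_suml; congr (- _); apply: eq_bigr => s _.
  by rewrite [Wm ((s + k)%N).+1]/Wm /= Bexp -!mulmxA.
have T2 : Xm *m (\sum_(t < k) Bt ^+ t *m ((Bt ^+ l *m Ym) *m E *m Xm - Ym *m E *m (Xm *m Bt ^+ l))
      *m Bt ^+ (k - t.+1)) *m Ym
  = \sum_(t < k) (Wm ((t + l)%N).+1 *m E *m Wm ((k - t.+1)%N).+1
                  - Wm t.+1 *m E *m Wm ((l + (k - t.+1))%N).+1).
  rewrite mulmx_sumr mulmx_suml; apply: eq_bigr => t _.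
  rewrite mulmxBr mulmxBl mulmxBr mulmxBl /Wm /=; congr (_ - _); by rewrite ?Bexp -!mulmxA.
have T3 : Xm *m Bt ^+ k *m (\sum_(s < l.+1) (Bt ^+ (l - s)%N *m Ym) *m E *m Wm s)
    = \sum_(s < l.+1) Wm ((k + (l - s))%N).+1 *m E *m Wm s.
  rewrite mulmx_sumr; apply: eq_bigr => s _.
  by rewrite [Wm ((k + _)%N).+1]/Wm /= Bexp -!mulmxA.
rewrite T1 T2 T3 /Phi !addmxE' oppmxE' !summxE.
congr (- _ + _ + _).
- by apply: eq_bigr => s _; rewrite mul_delta_mulE.
- by apply: eq_bigr => t _; rewrite addmxE' oppmxE' !mul_delta_mulE.
- by apply: eq_bigr => s _; rewrite mul_delta_mulE.
Qed.

Definition lam (j : nat) : R := (((2%:R : F) ^- j)%:MP).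

Lemma piTS j a b : piT F N K j.+1 a b = lam j * Wm j.+1 a b.
Proof. by rewrite /piT mxE. Qed.
Lemma piT0 a b : piT F N K 0 a b = Wm 0 a b.
Proof. by rewrite /piT /Wm mxE. Qed.

Lemma pbr_lam_l j f g : pbr (lam j * f) g = lam j * pbr f g.
Proof. exact: pbrCM. Qed.
Lemma pbr_lam_r j f g : pbr f (lam j * g) = lam j * pbr f g.
Proof. by rewrite pbr_anti pbrCM (pbr_anti f g) mulrN opprK. Qed.
Lemma pbr_W0l a b g : pbr (Wm 0 a b) g = 0.
Proof. by rewrite /Wm mxE pbr_nat. Qed.
Lemma pbr_W0r f c d : pbr f (Wm 0 c d) = 0.
Proof. by rewrite pbr_anti pbr_W0l oppr0. Qed.

Lemma lam0 : lam 0 = 1.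
Proof. by rewrite /lam expr0 invr1 mpolyC1. Qed.
Lemma lamS j : lam j.+1 = lam j * lam 1.
Proof. by rewrite /lam -mpolyCM expr1 exprSr invfM. Qed.
Lemma half2 : lam 1 * 2%:R = 1.
Proof.
rewrite /lam expr1 -mpolyC_nat -mpolyCM mulVf ?mpolyC1 //.
by rewrite pnatr_eq0.
Qed.

Lemma fin_alg (R0 : comRingType) (lk ll l1 two A B C D P1 P2 : R0) :
  l1 * two = 1 -> P1 - P2 = two * (A * B - C * D) ->
  lk * l1 * (ll * P1) - lk * (ll * l1 * P2) = ll * A * (lk * B) - lk * C * (ll * D).
Proof.
move=> h1 h2; have -> : P1 = P2 + two * (A * B - C * D) by rewrite -h2; ring.
transitivity (lk * ll * (l1 * two) * (A * B - C * D)); first ring.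
by rewrite h1; ring.
Qed.

Lemma main_all :
  (forall (i j : nat) (a b c d : 'I_K),
     pbr (piT F N K i.+1 a b) (piT F N K j c d)
     - pbr (piT F N K i a b) (piT F N K j.+1 c d)
     = piT F N K j a d * piT F N K i c b - piT F N K i a d * piT F N K j c b)
  /\ (forall (j : nat) (a b c d : 'I_K), pbr (piT F N K 0 a b) (piT F N K j c d) = 0)
  /\ (forall (i : nat) (a b c d : 'I_K), pbr (piT F N K i a b) (piT F N K 0 c d) = 0).
Proof.
split; last split.
- move=> [|k] [|l] a b c d.
  + by rewrite !piT0 pbr_W0l pbr_W0r subrr subrr.
  + rewrite !piTS !piT0 pbr_W0l pbr_lam_l pbr_lam_r main_br Phi0l lam0 subr0; ring.
  + rewrite !piTS !piT0 pbr_W0r pbr_lam_l pbr_lam_r main_br Phik0 lam0 sub0r; ring.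
  + rewrite !piTS !pbr_lam_l !pbr_lam_r !main_br.
    have H := PhiSS (fun x y => Wm x a d * Wm y c b) k l; cbv beta in H.
    rewrite (lamS k) (lamS l); apply: fin_alg; [exact: half2 | exact: H].
- by move=> j a b c d; rewrite piT0 pbr_W0l.
- by move=> i a b c d; rewrite piT0 pbr_W0r.
Qed.

End Work.

Unset Implicit Arguments.

Theorem mainTheorem12 (F : numClosedFieldType) (N K : nat) :
  (forall (i j : nat) (a b c d : 'I_K),
     pbr (piT F N K i.+1 a b) (piT F N K j c d)
     - pbr (piT F N K i a b) (piT F N K j.+1 c d)
     = piT F N K j a d * piT F N K i c b - piT F N K i a d * piT F N K j c b)
  /\ (forall (j : nat) (a b c d : 'I_K), pbr (piT F N K 0 a b) (piT F N K j c d) = 0)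
  /\ (forall (i : nat) (a b c d : 'I_K), pbr (piT F N K i a b) (piT F N K 0 c d) = 0).
Proof. exact: main_all. Qed.
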